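(* Every $\Rsh$-closed $\Rsh$-distributive subclass of a finite multi-algebra is dissociable.
   Context: A finite non-associative algebra is a tuple $(\mathcal A,\cup,\neg,\emptyset,\mathcal B,\diamond,\overline{\cdot},e)$ where $(\mathcal A,\cup,\neg,\emptyset,\mathcal B)$ is a finite Boolean algebra (with $x\cap y=\neg(\neg x\cup\neg y)$) and for all $x,y,z$: $\overline{\overline x}=x$, $\overline{x\cup y}=\overline x\cup\overline y$, $\overline{x\diamond y}=\overline y\diamond\overline x$, $e\diamond x=x\diamond e=x$, $x\diamond(y\cup z)=(x\diamond y)\cup(x\diamond z)$, $(x\diamond y)\cap\overline z=\emptyset\iff(y\diamond z)\cap\overline x=\emptyset$. $r\subseteq r'$ means $r\cup r'=r'$. A projection operator from $\mathcal A$ to $\mathcal A'$ is a map $\Rsh$ with $\Rsh(r\cup r')=\Rsh r\cup\Rsh r'$ and $\Rsh\overline r=\overline{\Rsh r}$. A finite multi-algebra is a product $\mathcal A_1\times\cdots\times\mathcal A_m$ of finite non-associative algebras with projection operators $\Rsh_i^j:\mathcal A_i\to\mathcal A_j$ for all distinct $i,j$; $\subseteq,\diamond,\cap,\overline{\cdot}$ componentwise on relations $R=(R_1,\dots,R_m)$. $R$ is closed under projection if $R_j\subseteq\Rsh_i^jR_i$ for all distinct $i,j$; the projection closure $\Rsh R$: repeatedly replace $R_j$ by $R_j\cap\Rsh_i^jR_i$ until a fixed point. A network over $\mathcal S$ is a finite set $E$ of variables with $N^{xy}\in\mathcal S$ for all distinct $x,y$, $N^{yx}=\overline{N^{xy}}$;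 $N_i^{xy}=(N^{xy})_i$. It is trivially inconsistent if some $N_i^{xy}=\emptyset$; closed under composition if $N^{xz}\subseteq N^{xy}\diamond N^{yz}$ for all distinct $x,y,z$; closed under projection if all $N^{xy}$ are; algebraically consistent if closed under both and not trivially inconsistent. $N$ is dissociable if replacing each $N^{xy}$ by $\Rsh N^{xy}$ and then closing under composition (repeating $N^{xz}\leftarrow N^{xz}\cap(N^{xy}\diamond N^{yz})$ to a fixed point) yields a network that is algebraically consistent or trivially inconsistent; a subset is dissociable if every network over it is. A subclass is a subset closed under $\diamond$, $\cap$ and converse; slices $\mathcal S_i=\{R_i:R\in\mathcal S\}$; $\mathcal S$ is $\Rsh$-closed if $\Rsh R\in\mathcal S$ for all $R\in\mathcal S$. $\mathcal S$ is $\Rsh$-distributive if for all distinct $i,j$: for all $r,r'\in\mathcal S_i$ with $r\diamond r'\neq\emptyset$, $(\Rsh_i^jr)\diamond(\Rsh_i^jr')\subseteq\Rsh_i^j(r\diamond r')$; and for all $r,r'\in\mathcal S_i$ with $r\cap r'\neq\emptyset$, $(\Rsh_i^jr)\cap(\Rsh_i^jr')\subseteq\Rsh_i^j(r\cap r')$. *)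

(* Defs.v *)
From HB Require Import structures.
From mathcomp Require Import all_boot all_order.
Set Implicit Arguments. Unset Strict Implicit. Unset Printing Implicit Defensive.
Import Order.Theory.
Local Open Scope order_scope.

(* The finite Boolean algebra (A, cup, neg, empty, B) is a MathComp    *)
(* finite complemented distributive lattice with top and bottom        *)
(* (finCTBDistrLatticeType): cup = join, neg = compl, empty = \bot,    *)
(* B = \top.  Intersection is defined as in the paper, via cup/neg.    *)

Record nalg := NAlg {
  nalg_disp : Order.disp_t;
  nalg_car : finCTBDistrLatticeType nalg_disp;
  nalg_comp : nalg_car -> nalg_car -> nalg_car;
  nalg_conv : nalg_car -> nalg_car;
  nalg_e : nalg_car;
  nalg_convK : forall x, nalg_conv (nalg_conv x) = x;
  nalg_convU : forall x y, nalg_conv (x `|` y) = nalg_conv x `|` nalg_conv y;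
  nalg_convM : forall x y,
      nalg_conv (nalg_comp x y) = nalg_comp (nalg_conv y) (nalg_conv x);
  nalg_e_left : forall x, nalg_comp nalg_e x = x;
  nalg_e_right : forall x, nalg_comp x nalg_e = x;
  nalg_compU : forall x y z,
      nalg_comp x (y `|` z) = nalg_comp x y `|` nalg_comp x z;
  nalg_cycle : forall x y z,
      (~` (~` (nalg_comp x y) `|` ~` (nalg_conv z)) = \bot)
      <-> (~` (~` (nalg_comp y z) `|` ~` (nalg_conv x)) = \bot)
}.

Definition cupA (A : nalg) (x y : nalg_car A) : nalg_car A := x `|` y.
Definition negA (A : nalg) (x : nalg_car A) : nalg_car A := ~` x.
Definition emptyA (A : nalg) : nalg_car A := \bot.
Definition capA (A : nalg) (x y : nalg_car A) : nalg_car A :=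
  negA (cupA (negA x) (negA y)).
Definition subA (A : nalg) (x y : nalg_car A) : Prop := cupA x y = y.

(* Finite multi-algebras: m algebras A_0..A_{m-1} with projection      *)
(* operators Rsh_i^j : A_i -> A_j for all distinct i, j.               *)
(* (Rsh_i^i is also a field, but no property of it is assumed and it   *)
(* is never used.)                                                     *)

Unset Implicit Arguments.
Record multialg := MultiAlg {
  ma_m : nat;
  ma_alg : 'I_ma_m -> nalg;
  ma_proj : forall i j : 'I_ma_m, nalg_car (ma_alg i) -> nalg_car (ma_alg j);
  ma_projU : forall (i j : 'I_ma_m), i != j ->
    forall r r' : nalg_car (ma_alg i),
      ma_proj i j (cupA r r') = cupA (ma_proj i j r) (ma_proj i j r');
  ma_projC : forall (i j : 'I_ma_m), i != j ->
    forall r : nalg_car (ma_alg i),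
      ma_proj i j (nalg_conv r) = nalg_conv (ma_proj i j r)
}.

Set Implicit Arguments.
Arguments ma_proj M i j _ : rename.

Section MultiAlgDefs.
Variable M : multialg.
Local Notation m := (ma_m M).
Local Notation A := (ma_alg M).
Local Notation P := (ma_proj M).

Definition mrel := forall i : 'I_m, nalg_car (A i).

Definition subR (R R' : mrel) : Prop := forall i, subA (R i) (R' i).
Definition compR (R R' : mrel) : mrel := fun i => nalg_comp (R i) (R' i).
Definition capR (R R' : mrel) : mrel := fun i => capA (R i) (R' i).
Definition convR (R : mrel) : mrel := fun i => nalg_conv (R i).

Definition proj_closed (R : mrel) : Prop :=
  forall i j : 'I_m, i != j -> subA (R j) (P i j (R i)).

Definition proj_step (i j : 'I_m) (R : mrel) : mrel :=
  fun k => if k == j then capA (R k) (P i k (R i)) else R k.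

Definition proj_round (R : mrel) : mrel :=
  foldl (fun R' (ij : 'I_m * 'I_m) =>
           if ij.1 != ij.2 then proj_step ij.1 ij.2 R' else R')
        R (enum [set: ('I_m * 'I_m)%type]).

Definition ma_size : nat := \sum_(i < m) #|nalg_car (A i)|.

(* projection closure: repeat the replacement steps until a fixed point;
   ma_size.+1 sweeps always suffice to reach it *)
Definition proj_closure (R : mrel) : mrel := iter ma_size.+1 proj_round R.

(* N x y is only meaningful for x != y.                                *)

Definition network_over (V : finType) (S : mrel -> Prop) (N : V -> V -> mrel) :=
  (forall x y, x != y -> S (N x y)) /\
  (forall x y, x != y -> forall i, N y x i = nalg_conv (N x y i)).

Definition triv_incons (V : finType) (N : V -> V -> mrel) : Prop :=
  exists x y, x != y /\ exists i, N x y i = emptyA (A i).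

Definition comp_closed (V : finType) (N : V -> V -> mrel) : Prop :=
  forall x y z, x != y -> y != z -> x != z ->
    subR (N x z) (compR (N x y) (N y z)).

Definition net_proj_closed (V : finType) (N : V -> V -> mrel) : Prop :=
  forall x y, x != y -> proj_closed (N x y).

Definition alg_consistent (V : finType) (N : V -> V -> mrel) : Prop :=
  comp_closed N /\ net_proj_closed N /\ ~ triv_incons N.

(* one composition step on the triple (x, y, z):
   N^{xz} <- N^{xz} cap (N^{xy} diamond N^{yz}), and N^{zx} is updated to
   the converse of the new N^{xz} so that the result is again a network *)
Definition comp_step (V : finType) (x y z : V) (N : V -> V -> mrel)
  : V -> V -> mrel :=
  let nxz := capR (N x z) (compR (N x y) (N y z)) in
  fun u v => if (u == x) && (v == z) then nxz
             else if (u == z) && (v == x) then convR nxz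
             else N u v.

Definition comp_round (V : finType) (N : V -> V -> mrel) : V -> V -> mrel :=
  foldl (fun N' (t : V * V * V) =>
           let: (x, y, z) := t in
           if [&& x != y, y != z & x != z] then comp_step x y z N' else N')
        N (enum [set: (V * V * V)%type]).

(* composition closure: repeat the steps until a fixed point;
   (#|V|^2 * ma_size).+1 sweeps always suffice to reach it *)
Definition comp_closure (V : finType) (N : V -> V -> mrel) : V -> V -> mrel :=
  iter ((#|V| * #|V| * ma_size).+1) (@comp_round V) N.

Definition net_dissociable (V : finType) (N : V -> V -> mrel) : Prop :=
  let N' := comp_closure (fun x y => proj_closure (N x y)) in
  alg_consistent N' \/ triv_incons N'.

Definition dissociable (S : mrel -> Prop) : Prop :=
  forall (V : finType) (N : V -> V -> mrel), network_over S N -> net_dissociable N.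

Definition subclass (S : mrel -> Prop) : Prop :=
  (forall R R', S R -> S R' -> S (compR R R')) /\
  (forall R R', S R -> S R' -> S (capR R R')) /\
  (forall R, S R -> S (convR R)).

Definition slice (S : mrel -> Prop) (i : 'I_m) (r : nalg_car (A i)) : Prop :=
  exists R, S R /\ R i = r.

Definition Rsh_closed (S : mrel -> Prop) : Prop :=
  forall R, S R -> S (proj_closure R).

Definition Rsh_distributive (S : mrel -> Prop) : Prop :=
  forall i j : 'I_m, i != j ->
    (forall r r', slice S r -> slice S r' ->
       nalg_comp r r' <> emptyA (A i) ->
       subA (nalg_comp (P i j r) (P i j r')) (P i j (nalg_comp r r'))) /\
    (forall r r', slice S r -> slice S r' ->
       capA r r' <> emptyA (A i) ->
       subA (capA (P i j r) (P i j r')) (P i j (capA r r'))).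

End MultiAlgDefs.

(* Main.v *)
Require Import Defs.
From mathcomp Require Import all_boot all_order.
From mathcomp Require Import zify.
From Stdlib Require Import Classical FunctionalExtensionality.
Set Implicit Arguments. Unset Strict Implicit. Unset Printing Implicit Defensive.
Import Order.Theory.
Local Open Scope order_scope.

Lemma foldl_dec (T : Type) (X : eqType) (le : T -> T -> Prop) (Inv : T -> Prop)
  (F : T -> X -> T)
  (le_refl : forall a, le a a) (le_trans : forall a b c, le a b -> le b c -> le a c)
  (HF : forall a t, Inv a -> Inv (F a t) /\ le (F a t) a) :
  forall s a, Inv a -> Inv (foldl F a s) /\ le (foldl F a s) a /\
   (forall t, t \in s -> exists b, Inv b /\ le b a /\ le (foldl F a s) (F b t)).
Proof.
elim=> [|t0 s IH] a Ia /=.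
  by split=> //; split=> //.
have [Ia' La'] := HF a t0 Ia.
have [If [Lf Hf]] := IH _ Ia'.
split=> //; split; first exact: le_trans Lf La'.
move=> t; rewrite in_cons => /orP [/eqP -> | ts].
  by exists a; split=> //; split.
have [b [Ib [Lb Hb]]] := Hf t ts.
by exists b; split=> //; split=> //; exact: le_trans Lb La'.
Qed.

Lemma iter_inv (T : Type) (f : T -> T) (Inv : T -> Prop)
  (Hinv : forall x, Inv x -> Inv (f x)) n x : Inv x -> Inv (iter n f x).
Proof. by move=> Ix; elim: n => //= n IH; apply: Hinv. Qed.

Lemma iter_fix (T : Type) (f : T -> T) (Inv : T -> Prop) (mu : T -> nat)
  (Hinv : forall x, Inv x -> Inv (f x))
  (Hdec : forall x, Inv x -> f x = x \/ (mu (f x) < mu x)%N) :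
  forall n x, Inv x -> (mu x <= n)%N -> f (iter n f x) = iter n f x.
Proof.
elim=> [|n IH] x Ix Hm.
  case: (Hdec x Ix) => //=; lia.
case: (Hdec x Ix) => [Hfx|Hlt].
  have E : forall k, iter k f x = x by elim=> //= k ->.
  by rewrite E.
rewrite iterSr; apply: IH; [exact: Hinv | lia].
Qed.

Lemma sum_strict (I : finType) (a b : I -> nat) (i0 : I) :
  (forall i, a i <= b i)%N -> (a i0 < b i0)%N -> (\sum_i a i < \sum_i b i)%N.
Proof.
move=> H H0; rewrite (bigD1 i0) //= [X in (_ < X)%N](bigD1 i0) //=.
have : (\sum_(i | i != i0) a i <= \sum_(i | i != i0) b i)%N by apply: leq_sum.
lia.
Qed.

Lemma foldl_comm (T X : Type) (F : T -> X -> T) (g : T -> T) :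
  (forall a t, F (g a) t = g (F a t)) -> forall s a, foldl F (g a) s = g (foldl F a s).
Proof. by move=> H; elim=> //= t s IH a; rewrite H IH. Qed.

Section Cnt.
Variables (d : Order.disp_t) (L : finPOrderType d).
Definition cnt (a : L) : nat := #|[pred y : L | y <= a]|.
Lemma cnt_le (a b : L) : a <= b -> (cnt a <= cnt b)%N.
Proof.
move=> ab; apply: subset_leq_card; apply/subsetP => y; rewrite !inE => ya.
exact: le_trans ya ab.
Qed.
Lemma cnt_lt (a b : L) : a <= b -> a <> b -> (cnt a < cnt b)%N.
Proof.
move=> ab nab; apply: proper_card; apply/properP; split.
  apply/subsetP => y; rewrite !inE => ya; exact: le_trans ya ab.
exists b; rewrite !inE ?lexx //; apply/negP => ba; apply: nab; apply/le_anti.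
by rewrite ab ba.
Qed.
Lemma cnt_max (a : L) : (cnt a <= #|L|)%N.
Proof. exact: max_card. Qed.
End Cnt.

Section Alg.
Variable a : nalg.
Implicit Types x y z : nalg_car a.
Lemma capAE x y : capA x y = x `&` y.
Proof. by rewrite /capA /cupA /negA complU !complK. Qed.
Lemma subAE x y : subA x y <-> x <= y.
Proof. by rewrite /subA /cupA; split=> [H|H]; apply/join_idPr. Qed.
Lemma conv_mono x y : x <= y -> nalg_conv x <= nalg_conv y.
Proof. by move/join_idPr => <-; rewrite nalg_convU leUl. Qed.
Lemma conv_le x y : (nalg_conv x <= y) = (x <= nalg_conv y).
Proof.
apply/idP/idP => H.
  by rewrite -[x]nalg_convK; apply: conv_mono.
by rewrite -[y]nalg_convK; apply: conv_mono.
Qed.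
Lemma conv_meet x y : nalg_conv (x `&` y) = nalg_conv x `&` nalg_conv y.
Proof.
apply/le_anti; rewrite lexI !conv_mono ?leIl ?leIr //=.
by rewrite -conv_le lexI !conv_le leIl leIr.
Qed.
Lemma comp_monor x y y' : y <= y' -> nalg_comp x y <= nalg_comp x y'.
Proof. by move/join_idPr => <-; rewrite nalg_compU leUl. Qed.
Lemma comp_monol x x' y : x <= x' -> nalg_comp x y <= nalg_comp x' y.
Proof.
move=> H; rewrite -[nalg_comp x y]nalg_convK conv_le !nalg_convM.
by apply: comp_monor; apply: conv_mono.
Qed.
Lemma comp_mono x x' y y' : x <= x' -> y <= y' -> nalg_comp x y <= nalg_comp x' y'.
Proof. by move=> H1 H2; apply: le_trans (comp_monol _ H1) (comp_monor _ H2). Qed.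
End Alg.
Section Main.
Variable M : multialg.
Local Notation m := (ma_m M).
Local Notation A := (ma_alg M).
Local Notation P := (ma_proj M).

Definition leR (R R' : mrel M) := forall i, R i <= R' i.
Definition muR (R : mrel M) : nat := \sum_(i < m) cnt (R i).

Lemma proj_mono (i j : 'I_m) (r r' : nalg_car (A i)) : i != j -> r <= r' -> P i j r <= P i j r'.
Proof.
move=> ij /join_idPr H; apply/join_idPr.
have := @ma_projU M i j ij r r'; rewrite /cupA H => E; by rewrite -E.
Qed.

Lemma muR_bound (R : mrel M) : (muR R <= ma_size M)%N.
Proof. by apply: leq_sum => i _; apply: cnt_max. Qed.

Lemma muR_dec (R' R : mrel M) : leR R' R -> R' = R \/ (muR R' < muR R)%N.
Proof.
move=> H; case: (classic (forall i, R' i = R i)) => [E|NE].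
  by left; apply: functional_extensionality_dep.
right; have [i Ni] := not_all_ex_not _ _ NE.
apply: (@sum_strict _ (fun i => cnt (R' i)) (fun i => cnt (R i)) i).
  by move=> k; apply: cnt_le.
exact: cnt_lt.
Qed.

Lemma proj_step_le (i j : 'I_m) (R : mrel M) : leR (proj_step i j R) R.
Proof.
move=> k; rewrite /proj_step; case: (k == j) => //.
by rewrite capAE leIl.
Qed.

Lemma proj_round_fix (R : mrel M) : proj_round R = R -> proj_closed R.
Proof.
rewrite /proj_round => E i j ij.
have Hrefl : forall a, leR a a by move=> a k.
have Htr : forall a b c, leR a b -> leR b c -> leR a c.
  by move=> a b c H1 H2 k; exact: le_trans (H1 k) (H2 k).
have HF : forall (a : mrel M) (t : 'I_m * 'I_m), True ->
   True /\ leR ((fun R' (ij : 'I_m * 'I_m) =>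
           if ij.1 != ij.2 then proj_step ij.1 ij.2 R' else R') a t) a.
  by move=> a [k l] _ /=; split=> //; case: ifP => // _; apply: proj_step_le.
have [_ [_ Hm]] := @foldl_dec _ _ _ _ (fun R' (ij : 'I_m * 'I_m) => if ij.1 != ij.2 then proj_step ij.1 ij.2 R' else R') Hrefl Htr HF (enum [set: ('I_m * 'I_m)%type]) R I.
have Hin : (i, j) \in enum [set: ('I_m * 'I_m)%type] by rewrite mem_enum inE.
have [b [_ [Lb Hb]]] := Hm (i, j) Hin.
rewrite E /= ij in Hb.
apply/subAE; have := Hb j; rewrite /proj_step eqxx capAE => H.
apply: le_trans H _; apply: le_trans (leIr _ _) _.
exact: proj_mono.
Qed.

Lemma proj_closure_closed (R : mrel M) : proj_closed (proj_closure R).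
Proof.
apply: proj_round_fix; rewrite /proj_closure.
apply: (@iter_fix _ (@proj_round M) (fun _ => True) muR _ _ (ma_size M).+1 R I) => //.
  move=> x _; apply: muR_dec.
  rewrite /proj_round.
  have Hrefl : forall a, leR a a by move=> a k.
  have Htr : forall a b c, leR a b -> leR b c -> leR a c.
    by move=> a b c H1 H2 k; exact: le_trans (H1 k) (H2 k).
  have HF : forall (a : mrel M) (t : 'I_m * 'I_m), True ->
     True /\ leR ((fun R' (ij : 'I_m * 'I_m) =>
           if ij.1 != ij.2 then proj_step ij.1 ij.2 R' else R') a t) a.
    by move=> a [k l] _ /=; split=> //; case: ifP => // _; apply: proj_step_le.
  by have [_ [H _]] := @foldl_dec _ _ _ _ (fun R' (ij : 'I_m * 'I_m) => if ij.1 != ij.2 then proj_step ij.1 ij.2 R' else R') Hrefl Htr HF (enum [set: ('I_m * 'I_m)%type]) x I.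
by apply: leqW; apply: muR_bound.
Qed.

Lemma proj_step_conv (i j : 'I_m) (R : mrel M) : i != j ->
  proj_step i j (convR R) = convR (proj_step i j R).
Proof.
move=> ij; apply: functional_extensionality_dep => k.
rewrite /proj_step /convR; case: (k =P j) => [E|_] //; subst k.
by rewrite !capAE (@ma_projC M i j ij) conv_meet.
Qed.

Lemma proj_closure_conv (R : mrel M) : proj_closure (convR R) = convR (proj_closure R).
Proof.
rewrite /proj_closure; elim: (ma_size M).+1 => //= n ->.
rewrite /proj_round; apply: foldl_comm => a [k l] /=.
by case: ifP => // kl; apply: proj_step_conv.
Qed.

End Main.
Section Comp.
Variable M : multialg.
Local Notation m := (ma_m M).
Local Notation A := (ma_alg M).
Local Notation P := (ma_proj M).
Variable S : mrel M -> Prop.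
Hypothesis HS : subclass S.
Hypothesis Hdist : Rsh_distributive S.
Variable V : finType.
Implicit Types N : V -> V -> mrel M.

Definition NetInv N := forall x y, x != y -> forall i, N y x i = nalg_conv (N x y i).
Definition InvC N := NetInv N /\ (forall x y, x != y -> S (N x y)) /\
  (triv_incons N \/ forall x y, x != y -> proj_closed (N x y)).
Definition leN N' N := forall x y i, N' x y i <= N x y i.
Definition muN N : nat := \sum_(p : V * V) muR (N p.1 p.2).

Lemma muN_bound N : (muN N <= #|V| * #|V| * ma_size M)%N.
Proof.
rewrite /muN -card_prod -sum_nat_const; apply: leq_sum => p _; exact: muR_bound.
Qed.

Lemma muN_dec N' N : leN N' N -> N' = N \/ (muN N' < muN N)%N.
Proof.
move=> H; case: (classic (forall x y, N' x y = N x y)) => [E|NE].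
  by left; do 2 (apply: functional_extensionality => ?); apply: E.
right; have [x Nx] := not_all_ex_not _ _ NE.
have [y Ny] := not_all_ex_not _ _ Nx.
apply: (@sum_strict _ (fun p => muR (N' p.1 p.2)) (fun p => muR (N p.1 p.2)) (x, y)).
  move=> [u v] /=; case: (muR_dec (H u v)) => [->|] //; lia.
by case: (muR_dec (H x y)).
Qed.

Lemma pc_conv (R : mrel M) : proj_closed R -> proj_closed (convR R).
Proof.
move=> H i j ij; apply/subAE; rewrite /convR /= (@ma_projC M i j ij).
by apply: conv_mono; apply/subAE; apply: H.
Qed.

Lemma pc_capcomp (R R1 R2 : mrel M) : S R -> S R1 -> S R2 ->
  proj_closed R -> proj_closed R1 -> proj_closed R2 ->
  (forall i, capR R (compR R1 R2) i <> emptyA (A i)) ->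
  proj_closed (capR R (compR R1 R2)).
Proof.
case: HS => [Hc [Hk Hv]] SR SR1 SR2 PR PR1 PR2 NE i j ij.
have [Dc Dk] := Hdist ij.
have ne := NE i; rewrite /capR /compR in ne *.
have sl1 : slice S (R i) by exists R.
have sl2 : slice S (nalg_comp (R1 i) (R2 i)) by exists (compR R1 R2); split=> //; apply: Hc.
have nec : nalg_comp (R1 i) (R2 i) <> emptyA (A i).
  by move=> E; apply: ne; rewrite E capAE /emptyA meetx0.
have sR1 : slice S (R1 i) by exists R1.
have sR2 : slice S (R2 i) by exists R2.
apply/subAE; apply: le_trans (proj1 (subAE _ _) (Dk _ _ sl1 sl2 ne)).
rewrite !capAE; apply: leI2; first by apply/subAE; apply: PR.
apply: le_trans (proj1 (subAE _ _) (Dc _ _ sR1 sR2 nec)).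
by apply: comp_mono; apply/subAE; [apply: PR1 | apply: PR2].
Qed.

End Comp.
Section Comp2.
Variable M : multialg.
Local Notation m := (ma_m M).
Local Notation A := (ma_alg M).
Local Notation P := (ma_proj M).
Variable S : mrel M -> Prop.
Hypothesis HS : subclass S.
Hypothesis Hdist : Rsh_distributive S.
Variable V : finType.
Implicit Types N : V -> V -> mrel M.

Lemma comp_step_inv (x y z : V) N : x != y -> y != z -> x != z -> InvC S N ->
  InvC S (comp_step x y z N) /\ leN (comp_step x y z N) N.
Proof.
move=> xy yz xz [NI [NS NP]].
case: HS => [Hc [Hk Hv]].
set nxz := capR (N x z) (compR (N x y) (N y z)).
have Lxz : comp_step x y z N x z = nxz by rewrite /comp_step !eqxx.
have Lzx : comp_step x y z N z x = convR nxz.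
  by rewrite /comp_step [z == x]eq_sym (negbTE xz) /= !eqxx.
have Lo : forall u v, ~ (u = x /\ v = z) -> ~ (u = z /\ v = x) ->
    comp_step x y z N u v = N u v.
  move=> u v H1 H2; rewrite /comp_step.
  case: ifP => [/andP [/eqP Eu /eqP Ev] | _]; first by case: H1.
  by case: ifP => [/andP [/eqP Eu /eqP Ev] | _] //; case: H2.
have cs : forall u v : V, (u = x /\ v = z) \/ (u = z /\ v = x) \/
    (~ (u = x /\ v = z) /\ ~ (u = z /\ v = x)).
  move=> u v; case: (classic (u = x /\ v = z)); first by left.
  by case: (classic (u = z /\ v = x)); [right; left | right; right].
have SN : S nxz by apply: Hk; [apply: NS | apply: Hc; apply: NS].
have Le : leN (comp_step x y z N) N.
  move=> u v i; case: (cs u v) => [[-> ->]|[[-> ->]|[H1 H2]]].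
  - by rewrite Lxz /nxz /capR capAE leIl.
  - rewrite Lzx (NI x z xz i) /convR; apply: conv_mono.
    by rewrite /nxz /capR capAE leIl.
  - by rewrite Lo.
split=> //; split; [|split].
- move=> u v uv i; move: uv; case: (cs u v) => [[-> ->]|[[-> ->]|[H1 H2]]] uv.
  + by rewrite Lzx Lxz.
  + by rewrite Lxz Lzx /convR nalg_convK.
  + have H1' : ~ (v = x /\ u = z) by case=> E1 E2; apply: H2.
    have H2' : ~ (v = z /\ u = x) by case=> E1 E2; apply: H1.
    by rewrite (Lo _ _ H1 H2) (Lo _ _ H1' H2'); apply: NI.
- move=> u v uv; move: uv; case: (cs u v) => [[-> ->]|[[-> ->]|[H1 H2]]] uv.
  + by rewrite Lxz.
  + by rewrite Lzx; apply: Hv.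
  + by rewrite Lo //; apply: NS.
- case: NP => [[a [b [ab [i E]]]]|PC].
    left; exists a, b; split=> //; exists i.
    have L := Le a b i; rewrite E in L; apply/eqP; by rewrite -lex0.
  case: (classic (exists i, nxz i = emptyA (A i))) => [[i E]|NE].
    by left; exists x, z; split=> //; exists i; rewrite Lxz.
  right=> u v uv; move: uv; case: (cs u v) => [[-> ->]|[[-> ->]|[H1 H2]]] uv.
  + rewrite Lxz; apply: (pc_capcomp HS Hdist) => //; try (apply: NS; done); try (apply: PC; done).
    by move=> i E; apply: NE; exists i.
  + rewrite Lzx; apply: pc_conv; apply: (pc_capcomp HS Hdist) => //; try (apply: NS; done); try (apply: PC; done).
    by move=> i E; apply: NE; exists i.
  + by rewrite Lo //; apply: PC.
Qed.

End Comp2.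
Theorem proposition6p9 (M : multialg) (S : mrel M -> Prop) :
  subclass S -> Rsh_closed S -> Rsh_distributive S -> dissociable S.
Proof.
move=> HS Hcl Hdist V N [HNS HNc].
rewrite /net_dissociable /=.
set N0 := fun x y => proj_closure (N x y).
pose Fc := (fun (N' : V -> V -> mrel M) (t : V * V * V) => let: (x, y, z) := t in
   if [&& x != y, y != z & x != z] then comp_step x y z N' else N').
have HF : forall a t, InvC S a -> InvC S (Fc a t) /\ leN (Fc a t) a.
  move=> a [[x y] z] Ia /=; case: ifP => [/and3P [xy yz xz]|_].
    exact: (comp_step_inv HS Hdist).
  by split=> // u v i; exact: lexx.
have Hrefl : forall a : V -> V -> mrel M, leN a a by move=> a u v i; exact: lexx.
have Htr : forall a b c : V -> V -> mrel M, leN a b -> leN b c -> leN a c.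
  by move=> a b c H1 H2 u v i; exact: le_trans (H1 u v i) (H2 u v i).
have Hround : forall a : V -> V -> mrel M, InvC S a -> InvC S (comp_round a) /\ leN (comp_round a) a.
  move=> a Ia.
  have [I1 [L1 _]] := @foldl_dec _ _ _ _ Fc Hrefl Htr HF (enum [set: (V * V * V)%type]) a Ia.
  by split.
have I0 : InvC S N0.
  split; [|split].
  - move=> x y xy i; rewrite /N0.
    have E : N y x = convR (N x y).
      by apply: functional_extensionality_dep => k; apply: HNc.
    by rewrite E proj_closure_conv.
  - by move=> x y xy; apply: Hcl; apply: HNS.
  - by right=> x y _; apply: proj_closure_closed.
set F := comp_closure N0.
have IF : InvC S F by apply: iter_inv => // a Ia; case: (Hround a Ia).
have fixF : comp_round F = F.
  rewrite /F /comp_closure.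
  apply: (@iter_fix _ (@comp_round M V) (fun a => InvC S a) (@muN M V) _ _ _ N0 I0).
  - by move=> a Ia; case: (Hround a Ia).
  - by move=> a Ia; apply: muN_dec; case: (Hround a Ia).
  - by apply: leqW; apply: muN_bound.
have ccF : comp_closed F.
  move=> x y z xy yz xz i.
  have [_ [_ Hm]] := @foldl_dec _ _ _ _ Fc Hrefl Htr HF (enum [set: (V * V * V)%type]) F IF.
  have Hin : (x, y, z) \in enum [set: (V * V * V)%type] by rewrite mem_enum inE.
  have [b [_ [Lb Hb]]] := Hm _ Hin.
  change (foldl Fc F (enum [set: (V * V * V)%type])) with (comp_round F) in Hb.
  rewrite fixF in Hb.
  have := Hb x z i; rewrite /Fc xy yz xz /= /comp_step !eqxx /= => H.
  apply/subAE; apply: le_trans H _; rewrite /capR /compR capAE.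
  by apply: le_trans (leIr _ _) _; apply: comp_mono; apply: Lb.
case: (classic (triv_incons F)) => [T|NT]; first by right.
left; split=> //; split=> //.
by case: IF => [_ [_ [T|PC]]].
Qed.
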